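(* Let $\mathcal{I}$ be a finite set of items, $u$ a user with real-valued preference scores $s_{ui}$ for $i \in \mathcal{I}$, and $\mathcal{P}_u \subseteq \mathcal{I}$ the set of positive items of $u$. Let $K \ge 1$ be an integer and $\tau_w, \tau_d > 0$. Define the ranking position $\pi_{ui} = \sum_{j \in \mathcal{I}} \mathbb{I}(s_{uj} \ge s_{ui})$, $$\mathrm{DCG}@K(u) = \sum_{i \in \mathcal{P}_u} \frac{\mathbb{I}(\pi_{ui} \le K)}{\log_2(\pi_{ui}+1)},$$ the Top-$K$ quantile $\beta_u^K = \inf\{ s_{ui} : i \in \mathcal{I},\ \pi_{ui} \le K\}$, the number of Top-$K$ hits $H_u^K = \sum_{i \in \mathcal{P}_u} \mathbb{I}(s_{ui} \ge \beta_u^K)$, and the loss $$\mathcal{L}_{\mathrm{SL@}K}(u) = \sum_{i \in \mathcal{P}_u} \sigma_w(s_{ui} - \beta_u^K)\cdot \log\Big( \sum_{j \in \mathcal{I}} \exp\big((s_{uj} - s_{ui})/\tau_d\big)\Big),$$ where $\sigma_w(x) = 1/(1 + \exp(-x/\tau_w))$. If $H_u^K > 1$, then $-\log \mathrm{DCG}@K(u) \le \mathcal{L}_{\mathrm{SL@}K}(u)$. If $H_u^K = 1$, then $-\frac{1}{2}\log \mathrm{DCG}@K(u) \le \mathcal{L}_{\mathrm{SL@}K}(u)$.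
   Context: $\mathbb{I}(\cdot)$ is the indicator function and $\log$ denotes the natural logarithm. $\mathcal{L}_{\mathrm{SL@}K}$ is called SoftmaxLoss@$K$ in the paper. *)

(* Defs.v *)
From HB Require Import structures.
From mathcomp Require Import all_boot all_order all_algebra.
From mathcomp Require Import all_classical all_reals all_analysis.
Set Implicit Arguments. Unset Strict Implicit. Unset Printing Implicit Defensive.
Import Order.TTheory GRing.Theory Num.Theory.
Local Open Scope ring_scope.
Local Open Scope classical_set_scope.

Definition rank_pos (R : realType) (I : finType) (s : I -> R) (i : I) : nat :=
  #|[set j | s i <= s j]|.

Definition DCG (R : realType) (I : finType) (K : nat) (s : I -> R) (P : {set I}) : R :=
  \sum_(i in P)
    ((rank_pos s i <= K)%N%:R / (ln ((rank_pos s i).+1%:R) / ln 2)).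

(* Top-K quantile beta = inf { s_i : pi_i <= K }, as an extended real
   (+oo if the set is empty). *)
Definition topK_quantile (R : realType) (I : finType) (K : nat) (s : I -> R) : \bar R :=
  ereal_inf [set (s i)%:E | i in [set i : I | (rank_pos s i <= K)%N]].

Definition hits (R : realType) (I : finType) (K : nat) (s : I -> R) (P : {set I}) : nat :=
  #|[set i in P | (topK_quantile K s <= (s i)%:E)%E]|.

Definition sigma_w (R : realType) (tw x : R) : R := 1 / (1 + expR (- x / tw)).

Definition SL_loss (R : realType) (I : finType) (K : nat) (tw td : R)
    (s : I -> R) (P : {set I}) : R :=
  \sum_(i in P)
    (sigma_w tw (s i - fine (topK_quantile K s)) *
     ln (\sum_(j : I) expR ((s j - s i) / td))).

(* Main.v *)
Require Import Defs.
From HB Require Import structures.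
From mathcomp Require Import all_boot all_order all_algebra.
From mathcomp Require Import all_classical all_reals all_analysis.
From mathcomp Require Import lra ring.
Import Order.TTheory GRing.Theory Num.Theory.
Local Open Scope ring_scope.
Set Implicit Arguments.

Section Aux.
Variables (R : realType) (I : finType) (s : I -> R).

Lemma rankE i : rank_pos s i = #|[pred j | s i <= s j]|.
Proof. apply: eq_card => j; rewrite [RHS]inE /=; apply/idP/idP => h; [exact: set_mem h | exact: mem_set]. Qed.

Lemma rank_ge1 i : (1 <= rank_pos s i)%N.
Proof. rewrite rankE; apply/card_gt0P; exists i; by rewrite inE /=. Qed.

Lemma rank_anti i j : s j <= s i -> (rank_pos s i <= rank_pos s j)%N.
Proof.
move=> hji; rewrite !rankE; apply: subset_leq_card; apply/fintype.subsetP => k; rewrite !inE /= => h.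
exact: le_trans hji h.
Qed.

Lemma hit_info K i : (topK_quantile K s <= (s i)%:E)%E ->
  (rank_pos s i <= K)%N /\ fine (topK_quantile K s) <= s i.
Proof.
move=> hb.
case: (pickP (fun j => rank_pos s j <= K)%N) => [j0 hj0|hn].
  case: (@arg_minP _ _ _ j0 (fun j => rank_pos s j <= K)%N s hj0) => m hm hmin.
  have eq : topK_quantile K s = (s m)%:E.
    apply/eqP; rewrite eq_le; apply/andP; split.
      by apply: ereal_inf_lbound; exists m.
    apply: le_ereal_inf_tmp => x [j hj <-]; rewrite lee_fin; exact: hmin.
  rewrite eq /= in hb *; rewrite lee_fin in hb; split => //.
  apply: leq_trans _ hm; exact: rank_anti.
exfalso.
have : (+oo <= topK_quantile K s)%E.
  apply: le_ereal_inf_tmp => x [j hj _]; move: hj; rewrite /= hn //.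
move=> h; have := le_trans h hb; by rewrite leNgt ltey.
Qed.

Lemma sigma_pos (tw x : R) : 0 < sigma_w tw x.
Proof.
rewrite /sigma_w mul1r invr_gt0; apply: ltr_pwDl => //; exact: expR_ge0.
Qed.

Lemma sigma_half (tw x : R) : 0 < tw -> 0 <= x -> 1/2 <= sigma_w tw x.
Proof.
move=> htw hx; rewrite /sigma_w.
have he : expR (- x / tw) <= 1.
  rewrite expR_le1 mulNr oppr_le0; exact: divr_ge0 (ltW htw).
have hp : 0 < 1 + expR (- x / tw) by apply: ltr_pwDl => //; exact: expR_ge0.
rewrite ler_pdivlMr // mulrC mulrA ler_pdivrMr //; lra.
Qed.

Lemma lse_ge1 (td : R) i : 1 <= \sum_(j : I) expR ((s j - s i) / td).
Proof.
rewrite (bigD1 i) //= subrr mul0r expR0 lerDl; apply: sumr_ge0 => j _.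
exact: expR_ge0.
Qed.

Lemma lse_ge_rank (td : R) i : 0 < td ->
  ln (rank_pos s i)%:R <= ln (\sum_(j : I) expR ((s j - s i) / td)).
Proof.
move=> htd.
have h1 := rank_ge1 i.
rewrite ler_ln ?posrE; last 2 first.
  by rewrite ltr0n.
  exact: lt_le_trans (lse_ge1 td i).
rewrite rankE -sum1_card.
rewrite natr_sum.
rewrite [X in _ <= X](bigID (fun j => s i <= s j)) /=.
rewrite -[X in X <= _]addr0; apply: lerD.
  apply: ler_sum => j; rewrite inE => hj.
  apply: le_trans (expR_ge1Dx _); rewrite lerDl divr_ge0 ?subr_ge0 //; exact: ltW.
apply: sumr_ge0 => j _; exact: expR_ge0.
Qed.

Definition dterm (K : nat) (i : I) : R :=
  (rank_pos s i <= K)%N%:R / (ln ((rank_pos s i).+1%:R) / ln 2).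

Lemma ln2_gt0 : 0 < ln (2 : R).
Proof. apply: ln_gt0; by rewrite ltr1n. Qed.

Lemma dterm_ge0 K i : 0 <= dterm K i.
Proof.
rewrite /dterm; apply: divr_ge0 => //; apply: divr_ge0; apply: ln_ge0;
  by rewrite ler1n.
Qed.

Lemma dterm_hit K i : (rank_pos s i <= K)%N -> 1 / (rank_pos s i)%:R <= dterm K i.
Proof.
move=> h; rewrite /dterm h mul1r !div1r.
have hr := rank_ge1 i.
set r := rank_pos s i in hr *.
have l2 := ln2_gt0.
have hl : ln (r.+1%:R : R) <= ln 2 * r%:R.
  rewrite mulr_natr -lnXn // ler_ln ?posrE ?exprn_gt0 // -natrX ler_nat.
  exact: ltn_expl.
have hlp : 0 < ln (r.+1%:R : R) by apply: ln_gt0; rewrite ltr1n.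
rewrite lef_pV2 ?posrE ?divr_gt0 ?ltr0n //.
by rewrite ler_pdivrMr // mulrC.
Qed.

Lemma sum_two (F : I -> R) (P : {set I}) a b :
  (forall i, i \in P -> 0 <= F i) -> a \in P -> b \in P -> a != b ->
  F a + F b <= \sum_(i in P) F i.
Proof.
move=> h0 ha hb ab; rewrite (bigD1 a) //= (bigD1 b) /=; last by rewrite hb eq_sym ab.
rewrite addrA lerDl; apply: sumr_ge0 => i /andP[/andP[hi _] _]; exact: h0.
Qed.

Lemma sum_one (F : I -> R) (P : {set I}) a :
  (forall i, i \in P -> 0 <= F i) -> a \in P -> F a <= \sum_(i in P) F i.
Proof.
move=> h0 ha; rewrite (bigD1 a) //= lerDl; apply: sumr_ge0 => i /andP[hi _]; exact: h0.
Qed.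

Definition lterm K (tw td : R) i : R :=
  sigma_w tw (s i - fine (topK_quantile K s)) *
     ln (\sum_(j : I) expR ((s j - s i) / td)).

Lemma lterm_ge0 K (tw td : R) i : 0 <= lterm K tw td i.
Proof. apply: mulr_ge0; [exact: ltW (sigma_pos _ _) | apply: ln_ge0; exact: lse_ge1]. Qed.

Lemma lterm_hit K (tw td : R) i : 0 < tw -> 0 < td ->
  (topK_quantile K s <= (s i)%:E)%E ->
  1/2 * ln (rank_pos s i)%:R <= lterm K tw td i.
Proof.
move=> htw htd hb; have [_ hf] := @hit_info K i hb.
rewrite /lterm; apply: ler_pM => //.
- apply: ln_ge0; rewrite ler1n; exact: rank_ge1.
- apply: sigma_half => //; by rewrite subr_ge0.
- exact: lse_ge_rank.
Qed.

End Aux.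

Lemma key2 (R : realType) (x y D L : R) : 1 <= x -> 1 <= y ->
  1/x + 1/y <= D -> (ln x + ln y) / 2 <= L -> - ln D <= L.
Proof.
move=> hx hy hD hL.
have x0 : 0 < x by lra.
have y0 : 0 < y by lra.
have s0 : 0 < 1/x + 1/y by rewrite addr_gt0 // divr_gt0.
have h1 : ln (1/x + 1/y) <= ln D by rewrite ler_ln ?posrE //; lra.
have e : 1/x + 1/y = (x + y) * (x^-1 * y^-1).
  by field; apply/andP; split; apply: lt0r_neq0.
have e2 : ln (1/x + 1/y) = ln (x + y) - ln x - ln y.
  rewrite e lnM ?posrE ?mulr_gt0 ?invr_gt0 ?addr_gt0 // lnM ?posrE ?invr_gt0 //.
  rewrite !lnV ?posrE //; lra.
have hxl : ln x <= ln (x + y) by rewrite ler_ln ?posrE ?addr_gt0 //; lra.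
have hyl : ln y <= ln (x + y) by rewrite ler_ln ?posrE ?addr_gt0 //; lra.
lra.
Qed.

Lemma key1 (R : realType) (x D L : R) : 1 <= x ->
  1/x <= D -> 1/2 * ln x <= L -> - (1/2) * ln D <= L.
Proof.
move=> hx hD hL.
have x0 : 0 < x by lra.
have s0 : 0 < 1/x by rewrite divr_gt0.
have h1 : ln (1/x) <= ln D by rewrite ler_ln ?posrE //; lra.
have e : ln (1/x) = - ln x by rewrite div1r lnV ?posrE.
lra.
Qed.


Arguments dterm {R I}. Arguments lterm {R I}.
Theorem theorem3p2 (R : realType) (I : finType) (s : I -> R) (P : {set I})
    (K : nat) (tw td : R) :
  (1 <= K)%N -> 0 < tw -> 0 < td ->
  ((1 < hits K s P)%N -> - ln (DCG K s P) <= SL_loss K tw td s P) /\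
  (hits K s P = 1%N -> - (1 / 2) * ln (DCG K s P) <= SL_loss K tw td s P).
Proof.
move=> hK htw htd.
have eD : DCG K s P = \sum_(i in P) dterm s K i by [].
have eL : SL_loss K tw td s P = \sum_(i in P) lterm s K tw td i by [].
have hD0 : forall i, i \in P -> 0 <= dterm s K i by move=> i _; exact: dterm_ge0.
have hL0 : forall i, i \in P -> 0 <= lterm s K tw td i by move=> i _; exact: lterm_ge0.
have hmem : forall a, a \in [set i in P | (topK_quantile K s <= (s i)%:E)%E] ->
    [/\ a \in P, (topK_quantile K s <= (s a)%:E)%E,
        1 / (rank_pos s a)%:R <= dterm s K a,
        1/2 * ln (rank_pos s a)%:R <= lterm s K tw td a &
        1 <= (rank_pos s a)%:R :> R].
  move=> a; rewrite inE => /andP[ha hb]; split => //.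
  - apply: dterm_hit; exact: (@hit_info _ _ s K a hb).1.
  - exact: lterm_hit.
  - rewrite ler1n; exact: rank_ge1.
split.
  rewrite /hits => /card_gt1P [a [b [ha hb ab]]].
  have [haP _ hDa hLa ra] := hmem a ha.
  have [hbP _ hDb hLb rb] := hmem b hb.
  rewrite eD eL; apply: (@key2 R _ _ _ _ ra rb).
    apply: le_trans _ (@sum_two R I _ _ _ _ hD0 haP hbP ab); exact: lerD.
  apply: le_trans _ (@sum_two R I _ _ _ _ hL0 haP hbP ab); lra.
rewrite /hits => h1.
have : (0 < #|[set i in P | (topK_quantile K s <= (s i)%:E)%E]|)%N by rewrite h1.
move=> /card_gt0P [a ha].
have [haP _ hDa hLa ra] := hmem a ha.
rewrite eD eL; apply: (@key1 R _ _ _ ra).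
  exact: le_trans _ (@sum_one R I _ _ _ hD0 haP).
exact: le_trans _ (@sum_one R I _ _ _ hL0 haP).
Qed.
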